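(* Let $\Sigma=\{\sigma_{\mathbf{a}|\mathbf{x}}\}$ be a no-signaling assemblage (with $n$ untrusted parties, outcome numbers $\mathcal{A}_i$, setting numbers $\mathcal{X}_i$, acting on $\mathbb{C}^d$). For each index $\mathbf{a}|\mathbf{x}$ let $R_{\mathbf{a}|\mathbf{x}}$ be the orthogonal projection onto $\mathrm{Im}(\sigma_{\mathbf{a}|\mathbf{x}})$, and let $\mathcal{L}$ be the set of all local deterministic boxes. Then $\Sigma$ is on the edge of the set of no-signaling assemblages if and only if $$\det\Big(\prod_{L\in\mathcal{L}}\Big(\prod_{\mathbf{a}|\mathbf{x}\in I_L}R_{\mathbf{a}|\mathbf{x}}-\mathbb{1}\Big)\Big)\neq 0,$$ where the (operator) products are taken in any fixed order.
   Context: Fix $n\ge 1$, integers $\mathcal{A}_i,\mathcal{X}_i\ge 1$ ($i=1,\dots,n$) and $d\ge1$. Write $\mathbf{a}|\mathbf{x}=a_1\dots a_n|x_1\dots x_n$ with $a_i\in\{0,\dots,\mathcal{A}_i-1\}$, $x_i\in\{0,\dots,\mathcal{X}_i-1\}$. A no-signaling assemblage is a collection $\Sigma=\{\sigma_{\mathbf{a}|\mathbf{x}}\}$ of positive semidefinite operators on $\mathbb{C}^d$ such that $\sum_{\mathbf{a}}\sigma_{\mathbf{a}|\mathbf{x}}=\rho_B$ for all $\mathbf{x}$, where $\rho_B$ is a fixed density operator (trace one), and for every subset $I=\{i_1,\dots,i_s\}\subset\{1,\dots,n\}$ with $1\le s<n$ the marginal $\sum_{a_j:\,j\notin I}\sigma_{\mathbf{a}|\mathbf{x}}$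 depends only on $a_{i_1},\dots,a_{i_s},x_{i_1},\dots,x_{i_s}$ (not on $x_j$, $j\notin I$). A local deterministic box $L$ is given by functions $f_i:\{0,\dots,\mathcal{X}_i-1\}\to\{0,\dots,\mathcal{A}_i-1\}$, with $p_L(\mathbf{a}|\mathbf{x})=\prod_i\delta_{a_i,f_i(x_i)}$; set $I_L=\{\mathbf{a}|\mathbf{x}: p_L(\mathbf{a}|\mathbf{x})\neq 0\}$. An assemblage admits an LHS model if $\sigma_{\mathbf{a}|\mathbf{x}}=\sum_j q_j\prod_{i=1}^n p^{(A_i)}_j(a_i|x_i)\rho_j$ with $q_j\ge0$, $\sum_j q_j=1$, density operators $\rho_j$ on $\mathbb{C}^d$ and conditional probability distributions $p^{(A_i)}_j(\cdot|x_i)$. A no-signaling assemblage $\Sigma$ is on the edge of the set of no-signaling assemblages if whenever $\Sigma=\epsilon\Sigma_1+(1-\epsilon)\Sigma_2$ with $\epsilon\in[0,1]$, $\Sigma_1$ an LHS assemblage and $\Sigma_2$ a no-signaling assemblage (same scenario), necessarily $\epsilon=0$. *)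

(* Defs.v *)
From mathcomp Require Import all_boot all_order all_algebra.
From mathcomp Require Import reals.
From mathcomp.real_closed Require Import complex.
Set Implicit Arguments.
Unset Strict Implicit.
Unset Printing Implicit Defensive.
Import Order.TTheory GRing.Theory Num.Theory.
Local Open Scope ring_scope.

Section Assemblages.
Variable R : realType.
Local Notation C := R[i].

Definition adj (m k : nat) (M : 'M[C]_(m, k)) : 'M[C]_(k, m) :=
  (map_mx Num.conj M)^T.

Definition psd (m : nat) (M : 'M[C]_m) : Prop :=
  adj M = M /\ forall v : 'cV[C]_m, 0 <= (adj v *m M *m v) 0 0.

Definition density (m : nat) (M : 'M[C]_m) : Prop := psd M /\ \tr M = 1.

(* P is the orthogonal projection onto the image (column space) of S *)
Definition orth_proj_onto (m : nat) (S P : 'M[C]_m) : Prop :=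
  P *m P = P /\ adj P = P /\ (P^T == S^T)%MS.

Variables (n : nat) (A X : 'I_n -> nat).

Definition outcome := {dffun forall i : 'I_n, 'I_(A i)}.
Definition setting := {dffun forall i : 'I_n, 'I_(X i)}.

Definition ldbox := {dffun forall i : 'I_n, {ffun 'I_(X i) -> 'I_(A i)}}.

Definition in_IL (L : ldbox) (ax : outcome * setting) : bool :=
  [forall i, ax.1 i == L i (ax.2 i)].

Variable d : nat.

Definition assemblage := outcome -> setting -> 'M[C]_d.

Definition no_signaling (S : assemblage) : Prop :=
  (exists rhoB : 'M[C]_d, density rhoB /\ forall x, \sum_a S a x = rhoB)
  /\ (forall a x, psd (S a x))
  /\ (forall I : {set 'I_n}, (0 < #|I| < n)%N ->
        forall (a : outcome) (x x' : setting),
          (forall i, i \in I -> x i = x' i) ->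
          \sum_(a' : outcome | [forall i in I, a' i == a i]) S a' x
          = \sum_(a' : outcome | [forall i in I, a' i == a i]) S a' x').

Definition LHS (S : assemblage) : Prop :=
  exists (m : nat) (q : 'I_m -> C) (rho : 'I_m -> 'M[C]_d)
         (p : 'I_m -> forall i : 'I_n, 'I_(X i) -> 'I_(A i) -> C),
    (forall j, 0 <= q j) /\ \sum_j q j = 1
    /\ (forall j, density (rho j))
    /\ (forall j i xi ai, 0 <= p j i xi ai)
    /\ (forall j i xi, \sum_ai p j i xi ai = 1)
    /\ (forall (a : outcome) (x : setting),
          S a x = \sum_j (q j * \prod_i p j i (x i) (a i)) *: rho j).

Definition on_edge (S : assemblage) : Prop :=
  forall (eps : C) (S1 S2 : assemblage),
    0 <= eps <= 1 -> LHS S1 -> no_signaling S2 ->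
    (forall a x, S a x = eps *: S1 a x + (1 - eps) *: S2 a x) ->
    eps = 0.

End Assemblages.

(* Main.v *)
Require Import Defs.
From mathcomp Require Import all_boot all_order all_algebra.
From mathcomp Require Import reals.
From mathcomp.real_closed Require Import complex.
From mathcomp Require Import ring lra.
Set Implicit Arguments. Unset Strict Implicit. Unset Printing Implicit Defensive.
Import Order.TTheory GRing.Theory Num.Theory.
Local Open Scope ring_scope.
Section Adj.
Variable R : realType.
Local Notation C := R[i].

Lemma hadjE m k (M : 'M[C]_(m,k)) i j : adj M i j = (M j i)^*.
Proof. by rewrite /adj !mxE. Qed.

Lemma hadjK m k (M : 'M[C]_(m,k)) : adj (adj M) = M.
Proof. by apply/matrixP=> i j; rewrite !hadjE conjCK. Qed.

Lemma hadjM m k l (M : 'M[C]_(m,k)) (N : 'M[C]_(k,l)) : adj (M *m N) = adj N *m adj M.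
Proof. by rewrite /adj map_mxM trmx_mul. Qed.

Lemma hadjD m k (M N : 'M[C]_(m,k)) : adj (M + N) = adj M + adj N.
Proof. by apply/matrixP=> i j; rewrite !(hadjE, mxE) rmorphD. Qed.

Lemma hadjN m k (M : 'M[C]_(m,k)) : adj (- M) = - adj M.
Proof. by apply/matrixP=> i j; rewrite !(hadjE, mxE) rmorphN. Qed.

Lemma hadjB m k (M N : 'M[C]_(m,k)) : adj (M - N) = adj M - adj N.
Proof. by rewrite hadjD hadjN. Qed.

Lemma hadjZ m k c (M : 'M[C]_(m,k)) : adj (c *: M) = c^* *: adj M.
Proof. by apply/matrixP=> i j; rewrite !(hadjE, mxE) rmorphM. Qed.

Lemma hadj0 m k : adj (0 : 'M[C]_(m,k)) = 0.
Proof. by apply/matrixP=> i j; rewrite !(hadjE, mxE) rmorph0. Qed.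

Lemma hadj1 m : adj (1%:M : 'M[C]_m) = 1%:M.
Proof. by apply/matrixP=> i j; rewrite !(hadjE, mxE) eq_sym; case: (i == j); rewrite ?rmorph1 ?rmorph0. Qed.

Lemma hadj_sum m k (I : finType) (P : pred I) (F : I -> 'M[C]_(m,k)) :
  adj (\sum_(i | P i) F i) = \sum_(i | P i) adj (F i).
Proof. by apply: (big_morph _ (@hadjD m k) (@hadj0 m k)). Qed.

Definition qf m (u : 'cV[C]_m) (M : 'M[C]_m) (z : 'cV[C]_m) := (adj u *m M *m z) 0 0.
Definition nrm m (y : 'cV[C]_m) := (adj y *m y) 0 0.

Lemma nrmE m (y : 'cV[C]_m) : nrm y = \sum_i `|y i 0| ^+ 2.
Proof. rewrite /nrm mxE; apply: eq_bigr => i _; by rewrite hadjE normCK mulrC. Qed.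

Lemma nrm_ge0 m (y : 'cV[C]_m) : 0 <= nrm y.
Proof. by rewrite nrmE sumr_ge0 // => i _; rewrite exprn_ge0. Qed.

Lemma nrm_eq0 m (y : 'cV[C]_m) : nrm y = 0 -> y = 0.
Proof.
rewrite nrmE => /eqP; rewrite psumr_eq0 => [/allP H|i _]; last by rewrite exprn_ge0.
apply/matrixP=> i j; rewrite (ord1 j) mxE.
have := H i (mem_index_enum _); rewrite sqrf_eq0 normr_eq0 => /eqP //.
Qed.

Lemma entry_conj m (y z : 'cV[C]_m) : ((adj y *m z) 0 0)^* = (adj z *m y) 0 0.
Proof. by rewrite -hadjE hadjM hadjK. Qed.

Lemma qf_conj m (u z : 'cV[C]_m) M : adj M = M -> (qf u M z)^* = qf z M u.
Proof. by move=> hM; rewrite /qf -hadjE !hadjM hadjK hM mulmxA. Qed.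

End Adj.

Section CS.
Variable R : realType.
Local Notation C := R[i].

Lemma qf_expand m (u z : 'cV[C]_m) M t :
  qf (u - t *: z) M (u - t *: z) =
  qf u M u - t * qf u M z - t^* * qf z M u + t^* * t * qf z M z.
Proof.
rewrite /qf hadjB hadjZ !(mulmxBl, mulmxBr) -!scalemxAl -!scalemxAr !mxE.
ring.
Qed.

Lemma CS m (M : 'M[C]_m) u z (k : C) : psd M -> 0 <= k ->
  0 <= qf u M u - k * (qf u M z * (qf u M z)^*) * (2 - k * qf z M z).
Proof.
move=> [hA hP] k0.
have kr : k^* = k by apply: conj_Creal; rewrite realE k0.
have := hP (u - (k * (qf u M z)^*) *: z).
rewrite -/(qf _ _ _) qf_expand (qf_conj _ _ hA) rmorphM /= kr (qf_conj _ _ hA).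
set r := qf u M z; set p := qf u M u; set q := qf z M z; set b := qf z M u.
move=> H; apply: (le_trans H); rewrite le_eqVlt; apply/orP; left; apply/eqP.
ring.
Qed.

Lemma psd_sqz m (M : 'M[C]_m) u : psd M -> qf u M u = 0 -> M *m u = 0.
Proof.
move=> hM h0; apply: nrm_eq0.
set q := qf (M *m u) M (M *m u).
have q0 : 0 <= q by apply: hM.2.
set k := (q + 1)^-1.
have k0 : 0 < k by rewrite invr_gt0 ltr_wpDl.
have := CS u (M *m u) hM (ltW k0).
rewrite h0 -/q.
have -> : qf u M (M *m u) = nrm (M *m u) by rewrite /qf /nrm hadjM hM.1 mulmxA.
rewrite -normCK sub0r oppr_ge0.
have s0 : 0 < 2 - k * q.
  have kq : k * q <= 1.
    rewrite /k mulrC ler_pdivrMr ?mul1r ?lerDl ?ler01 //.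
    by apply: (le_lt_trans q0); rewrite ltrDl ltr01.
  rewrite subr_gt0; apply: (le_lt_trans kq).
  by rewrite -[1]/(1%:R) ltr_nat.
move=> H.
have : k * `|nrm (M *m u)| ^+ 2 * (2 - k * q) == 0.
  by rewrite eq_le H /= !mulr_ge0 // ?(ltW k0) ?(ltW s0) ?exprn_ge0.
by rewrite !mulf_eq0 (gt_eqF k0) (gt_eqF s0) /= orbF orbb normr_eq0 => /eqP.
Qed.
End CS.


Section Proj.
Variable R : realType.
Local Notation C := R[i].

Lemma qfD m (u z : 'cV[C]_m) M N : qf u (M + N) z = qf u M z + qf u N z.
Proof. by rewrite /qf mulmxDr mulmxDl mxE. Qed.
Lemma qfZ m (u z : 'cV[C]_m) c M : qf u (c *: M) z = c * qf u M z.
Proof. by rewrite /qf -scalemxAr -scalemxAl mxE. Qed.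
Lemma qf0 m (u z : 'cV[C]_m) : qf u 0 z = 0.
Proof. by rewrite /qf mulmx0 mul0mx mxE. Qed.
Lemma qf_sum m (u z : 'cV[C]_m) (I : finType) (P : pred I) (F : I -> 'M[C]_m) :
  qf u (\sum_(i | P i) F i) z = \sum_(i | P i) qf u (F i) z.
Proof. exact: (big_morph _ (qfD u z) (qf0 u z)). Qed.

Definition isproj m (P : 'M[C]_m) := P *m P = P /\ adj P = P.

Lemma proj_fix m (S P : 'M[C]_m) : orth_proj_onto S P -> P *m S = S.
Proof.
move=> [PP [aP /andP [_ sub]]].
have /submxP [D hD] := sub.
have -> : S = P *m D^T by rewrite -[S]trmxK hD trmx_mul trmxK.
by rewrite mulmxA PP.
Qed.

Lemma tr3 m (A B D : 'M[C]_m) : (A *m B *m D)^T = D^T *m B^T *m A^T.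
Proof. by rewrite !trmx_mul mulmxA. Qed.

Lemma proj_sol m (S P : 'M[C]_m) (v : 'cV[C]_m) :
  orth_proj_onto S P -> P *m v = v -> S *m ((pinvmx S^T)^T *m v) = v.
Proof.
move=> [PP [aP /andP [sub _]]] Pv.
have := mulmxKpV sub.
move=> /(congr1 trmx); rewrite tr3 !trmxK => E.
move: (pinvmx S^T) E => X E.
by rewrite -{2}Pv -{1}E -!mulmxA Pv.
Qed.

Lemma proj_absorb m (S P rho : 'M[C]_m) : orth_proj_onto S P -> adj S = S -> psd rho ->
  (forall u, qf u S u = 0 -> qf u rho u = 0) -> P *m rho = rho.
Proof.
move=> hP aS hr H.
have [PP [aP _]] := hP.
have PS := proj_fix hP.
set Q := 1%:M - P.
have SQ : S *m Q = 0.
  have SP : S *m P = S by rewrite -aS -aP -hadjM PS.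
  by rewrite /Q mulmxBr mulmx1 SP subrr.
have rQ : rho *m Q = 0.
  apply/matrixP=> i j.
  have h1 : qf (Q *m delta_mx j 0) S (Q *m delta_mx j 0) = 0.
    by rewrite /qf mulmxA -(mulmxA _ S) SQ mulmx0 mul0mx mxE.
  have := psd_sqz hr (H _ h1) => /(congr1 (fun M : 'cV[C]_m => M i 0)).
  by rewrite mulmxA -colE !mxE.
have : adj (rho *m Q) = 0 by rewrite rQ hadj0.
rewrite hadjM hr.1 /Q hadjB hadj1 aP mulmxBl mul1mx => /eqP.
by rewrite subr_eq0 => /eqP.
Qed.

Lemma nrm_proj m (P : 'M[C]_m) y : isproj P ->
  nrm y = nrm (P *m y) + nrm ((1%:M - P) *m y).
Proof.
move=> [PP aP].
have PQ : P *m (1%:M - P) = 0 by rewrite mulmxBr mulmx1 PP subrr.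
have QP : (1%:M - P) *m P = 0 by rewrite mulmxBl mul1mx PP subrr.
have ey : y = P *m y + (1%:M - P) *m y by rewrite -mulmxDl addrC subrK mul1mx.
have addE : forall A B : 'M[C]_1, (A + B) 0 0 = A 0 0 + B 0 0 by move=> A B; rewrite mxE.
have aQ : adj (1%:M - P) = 1%:M - P by rewrite hadjB hadj1 aP.
move: (1%:M - P) PQ QP ey aQ => Q PQ QP ey aQ.
rewrite {1}ey /nrm hadjD mulmxDl !mulmxDr.
have -> : adj (P *m y) *m (Q *m y) = 0.
  by rewrite hadjM aP mulmxA -(mulmxA _ P) PQ mulmx0 mul0mx.
have -> : adj (Q *m y) *m (P *m y) = 0.
  by rewrite hadjM aQ mulmxA -(mulmxA _ Q) QP mulmx0 mul0mx.
by rewrite addr0 add0r addE.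
Qed.

Lemma nrm_proj_le m (P : 'M[C]_m) y : isproj P -> nrm (P *m y) <= nrm y.
Proof. by move=> hP; rewrite (nrm_proj y hP) lerDl nrm_ge0. Qed.

Lemma nrm_proj_eq m (P : 'M[C]_m) y : isproj P -> nrm (P *m y) = nrm y -> P *m y = y.
Proof.
move=> hP E.
have : nrm ((1%:M - P) *m y) = 0.
  have := nrm_proj y hP; rewrite -E -{1}(addr0 (nrm (P *m y))) => /addrI.
  by move=> <-.
move=> /nrm_eq0; rewrite mulmxBl mul1mx => /eqP; rewrite subr_eq0 => /eqP //.
Qed.

Lemma prod_fix (T : eqType) m (F : T -> 'M[C]_m.+1) (s : seq T) (v : 'cV[C]_m.+1) :
  (forall t, t \in s -> isproj (F t)) ->
  (\prod_(t <- s) F t) *m v = v -> forall t, t \in s -> F t *m v = v.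
Proof.
have le : forall s, (forall t, t \in s -> isproj (F t)) -> nrm ((\prod_(t <- s) F t) *m v) <= nrm v.
  elim=> [|a s0 IH] hs; first by rewrite big_nil mul1mx.
  rewrite big_cons -mulmxE -mulmxA.
  apply: le_trans (nrm_proj_le _ (hs a (mem_head _ _))) _.
  by apply: IH => t ts; apply: hs; rewrite inE ts orbT.
elim: s => [|a s IH] hs; first by [].
rewrite big_cons -mulmxE -mulmxA => E.
set w := (\prod_(t <- s) F t) *m v in E.
have hs' : forall t, t \in s -> isproj (F t) by move=> t ts; apply: hs; rewrite inE ts orbT.
have Ew : w = v.
  have Ha := hs a (mem_head _ _).
  have e1 : nrm (F a *m w) = nrm w.
    apply/le_anti; rewrite nrm_proj_le //= E.
    exact: le s hs'.
  by rewrite -(nrm_proj_eq Ha e1).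
move=> t; rewrite inE => /orP [/eqP -> | ts].
  by rewrite -{1}Ew E.
exact: IH hs' Ew t ts.
Qed.

Lemma fix_prod (T : eqType) m (F : T -> 'M[C]_m.+1) (s : seq T) (v : 'cV[C]_m.+1) :
  (forall t, t \in s -> F t *m v = v) -> (\prod_(t <- s) F t) *m v = v.
Proof.
elim: s => [|a s IH] hs; first by rewrite big_nil mul1mx.
rewrite big_cons -mulmxE -mulmxA IH ?hs ?mem_head // => t ts.
by apply: hs; rewrite inE ts orbT.
Qed.

End Proj.

Section Psd.
Variable R : realType.
Local Notation C := R[i].

Lemma ge0_conj (c : C) : 0 <= c -> c^* = c.
Proof. by move=> c0; apply: conj_Creal; rewrite realE c0. Qed.

Lemma mx11M m (A : 'M[C]_(1,m)) (B : 'M[C]_(m,1)) (D : 'M[C]_(1, m)) (E : 'M[C]_(m,1)) :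
  (A *m B *m (D *m E)) 0 0 = (A *m B) 0 0 * (D *m E) 0 0.
Proof. by rewrite [in LHS]mxE big_ord1. Qed.

Lemma psdZ m (M : 'M[C]_m) c : psd M -> 0 <= c -> psd (c *: M).
Proof.
move=> [aM pM] c0; split; first by rewrite hadjZ aM ge0_conj.
by move=> v; rewrite -/(qf _ _ _) qfZ mulr_ge0 //; apply: pM.
Qed.

Lemma psd0 m : psd (0 : 'M[C]_m).
Proof. by split; [rewrite hadj0 | move=> v; rewrite -/(qf _ _ _) qf0]. Qed.

Lemma psdD m (M N : 'M[C]_m) : psd M -> psd N -> psd (M + N).
Proof.
move=> [aM pM] [aN pN]; split; first by rewrite hadjD aM aN.
by move=> v; rewrite -/(qf _ _ _) qfD addr_ge0 //; [apply: pM | apply: pN].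
Qed.

Lemma psd_sum m (I : finType) (F : I -> 'M[C]_m) : (forall i, psd (F i)) -> psd (\sum_i F i).
Proof.
move=> H; apply: (big_ind (fun M => psd M)) => //; [exact: psd0 | exact: psdD].
Qed.

Lemma rank1_psd m (S : 'M[C]_m) w v (k : C) : psd S -> S *m w = v -> 0 <= k ->
  k * qf w S w <= 1 -> psd (S - k *: (v *m adj v)).
Proof.
move=> hS Sw k0 kq; split.
  by rewrite hadjB hadjZ hadjM hadjK hS.1 ge0_conj.
move=> u; rewrite -/(qf _ _ _) qfD -scaleNr qfZ.
have -> : qf u (v *m adj v) u = qf u S w * (qf u S w)^*.
  have er : qf u S w = (adj u *m v) 0 0 by rewrite /qf -mulmxA Sw.
  by rewrite er entry_conj /qf mulmxA -mulmxA mx11M.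
have := CS u w hS k0.
set p := qf u S u; set r := qf u S w; set q := qf w S w => H.
apply: (le_trans H).
rewrite -subr_ge0.
have -> : p + - k * (r * r^*) - (p - k * (r * r^*) * (2 - k * q)) = k * (r * r^*) * (1 - k * q) by ring.
rewrite mulr_ge0 ?subr_ge0 // mulr_ge0 // -normCK exprn_ge0 //.
Qed.

End Psd.

Section K1.
Variables (R : realType) (n : nat) (A X : 'I_n -> nat) (d : nat).
Local Notation C := R[i].

Lemma det_prod (T : Type) (s : seq T) (F : T -> 'M[C]_d.+1) :
  \det (\prod_(t <- s) F t) = \prod_(t <- s) \det (F t).
Proof. by apply: (big_morph _ (fun A B => det_mulmx A B) (det1 _ _)). Qed.

Lemma K1 (S : assemblage R A X d.+1)
  (Rp : outcome A -> setting X -> 'M[C]_d.+1)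
  (hRp : forall a x, orth_proj_onto (S a x) (Rp a x))
  (ordL : seq (ldbox A X)) (ordI : ldbox A X -> seq (outcome A * setting X))
  (hordL : perm_eq ordL (enum (ldbox A X)))
  (hordI : forall L, perm_eq (ordI L) [seq ax <- enum {: outcome A * setting X} | in_IL L ax]) :
  (\det (\prod_(L <- ordL) (\prod_(ax <- ordI L) Rp ax.1 ax.2 - 1)) == 0) <->
  exists L (v : 'cV[C]_d.+1), v != 0 /\ forall ax, in_IL L ax -> Rp ax.1 ax.2 *m v = v.
Proof.
have memI : forall L ax, (ax \in ordI L) = in_IL L ax.
  by move=> L ax; rewrite (perm_mem (hordI L)) mem_filter mem_enum andbT.
have prj : forall L ax, ax \in ordI L -> isproj (Rp ax.1 ax.2).
  by move=> L ax _; have [h1 [h2 _]] := hRp ax.1 ax.2; split.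
rewrite det_prod; split.
  rewrite prodf_seq_eq0 => /hasP [L _ /= /eqP hL].
  move: hL; rewrite -det_tr => /eqP /det0P [r r0 hr].
  exists L, r^T; split; first by rewrite trmx_eq0.
  have E : (\prod_(ax <- ordI L) Rp ax.1 ax.2) *m r^T = r^T.
    have := congr1 trmx hr; rewrite trmx_mul trmxK trmx0 mulmxBl mul1mx => /eqP.
    by rewrite subr_eq0 => /eqP.
  move=> ax hax; apply: (prod_fix (F := fun ax => Rp ax.1 ax.2) (prj L) E).
  by rewrite memI.
move=> [L [v [v0 hv]]].
rewrite prodf_seq_eq0; apply/hasP; exists L.
  by rewrite (perm_mem hordL) mem_enum.
apply/eqP; rewrite -det_tr; apply/eqP/det0P; exists v^T; first by rewrite trmx_eq0.
have E : (\prod_(ax <- ordI L) Rp ax.1 ax.2) *m v = v.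
  by apply: fix_prod => ax; rewrite memI; apply: hv.
by rewrite -[v^T *m _]trmxK trmx_mul !trmxK mulmxBl mul1mx E subrr trmx0.
Qed.

Definition Lx (L : ldbox A X) (x : setting X) : outcome A := finfun (fun i => L i (x i)).
Lemma inIL_eq L a x : in_IL L (a, x) = (a == Lx L x).
Proof.
apply/forallP/eqP => [H|->] /=.
  by apply/ffunP => i; rewrite ffunE; apply/eqP; exact: H.
by move=> i; rewrite ffunE.
Qed.
End K1.

Section DirA.
Variables (R : realType) (n : nat) (A X : 'I_n -> nat) (d : nat).
Local Notation C := R[i].

Lemma notE_edge (hA : forall i, (0 < A i)%N) (S : assemblage R A X d.+1) (hS : no_signaling S)
  (Rp : outcome A -> setting X -> 'M[C]_d.+1)
  (hRp : forall a x, orth_proj_onto (S a x) (Rp a x)) :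
  (forall L (v : 'cV[C]_d.+1), v != 0 -> ~ (forall ax, in_IL L ax -> Rp ax.1 ax.2 *m v = v)) ->
  on_edge S.
Proof.
move=> NE eps S1 S2 /andP[e0 e1] [m [q [rho [p [q0 [qs [hrho [p0 [ps hS1]]]]]]]]] hS2 dec.
apply/eqP; apply/negPn/negP => en.
have [j qj] : exists j, q j != 0.
  case: (pickP (fun j => q j != 0)) => [j hj|H]; first by exists j.
  move: qs; rewrite big1 => [/eqP|j _]; first by rewrite eq_sym oner_eq0.
  by move: (H j) => /negbFE/eqP.
pose L : ldbox A X :=
  finfun (fun i => [ffun xi => odflt (Ordinal (hA i)) [pick ai | p j i xi ai != 0]]).
have pL : forall i xi, p j i xi (L i xi) != 0.
  move=> i xi; rewrite /L !ffunE; case: pickP => [ai //|H].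
  exfalso; move: (ps j i xi); rewrite big1 => [/eqP|ai _]; first by rewrite eq_sym oner_eq0.
  by move: (H ai) => /negbFE/eqP.
have rj0 : rho j != 0.
  apply/eqP => h; have := (hrho j).2; rewrite h mxtrace0 => /eqP; by rewrite eq_sym oner_eq0.
have [k vk] : exists k, rho j *m delta_mx k (0 : 'I_1) != 0.
  case: (pickP (fun k => rho j *m delta_mx k (0:'I_1) != 0)) => [k hk|H]; first by exists k.
  exfalso; move/eqP: rj0; apply; apply/matrixP => i k.
  have /negbFE/eqP := H k.
  by move/(congr1 (fun M : 'cV[C]_d.+1 => M i 0)); rewrite -colE !mxE.
apply: (NE L _ vk) => [[a x]] /= hax.
have Rr : Rp a x *m rho j = rho j.
  apply: (proj_absorb (hRp a x) (hS.2.1 a x).1 (hrho j).1) => u hu.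
  move: hu; rewrite (dec a x) qfD !qfZ hS1 qf_sum.
  under eq_bigr do rewrite qfZ.
  have t0 : forall j', 0 <= qf u (rho j') u by move=> j'; apply: (hrho j').1.2.
  have c0 : forall j', 0 <= q j' * \prod_i p j' i (x i) (a i).
    by move=> j'; rewrite mulr_ge0 // prodr_ge0.
  move/eqP; rewrite paddr_eq0; first last.
  - by rewrite mulr_ge0 ?subr_ge0 //; apply: (hS2.2.1 a x).2.
  - by rewrite mulr_ge0 // sumr_ge0 // => j' _; rewrite mulr_ge0.
  move=> /andP [h1 _]; move: h1; rewrite mulf_eq0 (negbTE en) /= => /eqP h1.
  have := psumr_eq0P (fun j' _ => mulr_ge0 (c0 j') (t0 j')) h1 (i := j) isT.
  move/eqP; rewrite mulf_eq0 => /orP [|/eqP //].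
  rewrite mulf_eq0 (negbTE qj) /=.
  move: hax; rewrite inIL_eq => /eqP ->.
  have : \prod_i p j i (x i) (Lx L x i) != 0.
    by apply/prodf_neq0 => i _; rewrite ffunE; apply: pL.
  by move/negbTE => ->.
by rewrite mulmxA Rr.
Qed.
End DirA.

Section DirB.
Variables (R : realType) (n : nat) (A X : 'I_n -> nat) (d : nat).
Local Notation C := R[i].

Lemma mxtraceB m (M N : 'M[C]_m) : \tr (M - N) = \tr M - \tr N.
Proof. by rewrite -scaleN1r mxtraceD mxtraceZ mulN1r. Qed.

Lemma tr11 m (v : 'cV[C]_m) : \tr (v *m adj v) = nrm v.
Proof. by rewrite mxtrace_mulC /mxtrace big_ord1. Qed.

Lemma rho_density m (v : 'cV[C]_m) : 0 < nrm v -> density ((nrm v)^-1 *: (v *m adj v)).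
Proof.
move=> N0; have Ni : 0 <= (nrm v)^-1 by rewrite invr_ge0 ltW.
split; last by rewrite mxtraceZ tr11 mulVf // gt_eqF.
apply: psdZ => //; split; first by rewrite hadjM hadjK.
move=> u; rewrite -/(qf _ _ _) /qf mulmxA -mulmxA mx11M -(entry_conj u v).
by rewrite -normCK exprn_ge0.
Qed.

Lemma E_notedge (hX : forall i, (0 < X i)%N) (S : assemblage R A X d.+1) (hS : no_signaling S)
  (Rp : outcome A -> setting X -> 'M[C]_d.+1)
  (hRp : forall a x, orth_proj_onto (S a x) (Rp a x)) L (v : 'cV[C]_d.+1) :
  v != 0 -> (forall ax, in_IL L ax -> Rp ax.1 ax.2 *m v = v) -> on_edge S -> False.
Proof.
move=> v0 hv hedge.
have [[rhoB [[hrB trB] hsum]] [hpsd hmarg]] := hS.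
pose w (ax : outcome A * setting X) := (pinvmx (S ax.1 ax.2)^T)^T *m v.
have Sw : forall ax, in_IL L ax -> S ax.1 ax.2 *m w ax = v.
  by move=> ax h; apply: proj_sol (hRp _ _) (hv ax h).
pose qv ax := qf (w ax) (S ax.1 ax.2) (w ax).
have qv0 : forall ax, 0 <= qv ax by move=> ax; apply: (hpsd _ _).2.
pose Nv := nrm v.
have Nv0 : 0 < Nv.
  rewrite lt_def nrm_ge0 andbT; apply/eqP => /nrm_eq0 h; by rewrite h eqxx in v0.
pose T := Nv + \sum_ax qv ax.
have T0 : 0 < T by apply: (lt_le_trans Nv0); rewrite lerDl sumr_ge0.
have qT : forall ax, qv ax <= T.
  move=> ax; apply: (@le_trans _ _ (\sum_ax qv ax)); last by rewrite lerDr ltW.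
  by rewrite (bigD1 ax) //= lerDl sumr_ge0.
have T2 : T <= T *+ 2 by rewrite mulr2n lerDl ltW.
have T2' : 0 < T *+ 2 by apply: (lt_le_trans T0).
pose k := (T *+ 2)^-1.
have k0 : 0 < k by rewrite invr_gt0.
have kq : forall ax, k * qv ax <= 1.
  move=> ax; rewrite mulrC ler_pdivrMr // mul1r.
  exact: le_trans (qT ax) T2.
pose eps := Nv * k.
have e0 : 0 < eps by rewrite mulr_gt0.
have e1 : eps < 1.
  rewrite /eps ltr_pdivrMr // mul1r.
  apply: (le_lt_trans (_ : Nv <= T)); first by rewrite lerDl sumr_ge0.
  by rewrite mulr2n ltrDl.
pose rho := Nv^-1 *: (v *m adj v).
have hrho : density rho by apply: rho_density.
pose S1 (a : outcome A) (x : setting X) := if in_IL L (a, x) then rho else 0.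
pose S2 (a : outcome A) (x : setting X) := (1 - eps)^-1 *: (S a x - eps *: S1 a x).
have ne1 : 1 - eps != 0 by rewrite subr_eq0 eq_sym lt_eqF.
have ie0 : 0 <= (1 - eps)^-1 by rewrite invr_ge0 subr_ge0 ltW.
have epsrho : eps *: rho = k *: (v *m adj v).
  by rewrite /rho scalerA /eps mulrAC mulfV ?gt_eqF // mul1r.
have LHS1 : Defs.LHS S1.
  exists 1%N, (fun _ => 1), (fun _ => rho),
    (fun _ i xi ai => ((ai == L i xi) : nat)%:R).
  split; first by move=> _; apply: ler01.
  split; first by rewrite big_ord1.
  split; first by [].
  split; first by move=> *; apply: ler0n.
  split.
    move=> _ i xi; rewrite (bigD1 (L i xi)) //= eqxx big1 ?addr0 //.
    by move=> ai /negbTE ->.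
  move=> a x; rewrite big_ord1 mul1r /S1.
  case: ifP => h.
    rewrite big1 ?scale1r // => i _.
    by move/forallP: h => /(_ i) /= ->.
  move/negbT: h => /forallPn [i /= hi].
  by rewrite (bigD1 i) //= (negbTE hi) mul0r scale0r.
have sumS1 : forall x, \sum_a S1 a x = rho.
  move=> x; rewrite /S1 -big_mkcond /=.
  by rewrite (big_pred1 (Lx L x)) // => a; rewrite inIL_eq.
have psdS2 : forall a x, psd (S2 a x).
  move=> a x; apply: psdZ => //; rewrite /S1; case: ifP => h.
    by rewrite epsrho; apply: (rank1_psd (hpsd a x) (Sw (a, x) h) (ltW k0) (kq (a, x))).
  by rewrite scaler0 subr0; apply: hpsd.
have NS2 : no_signaling S2.
  split.
    exists ((1 - eps)^-1 *: (rhoB - eps *: rho)).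
    have sumS2 : forall x, \sum_a S2 a x = (1 - eps)^-1 *: (rhoB - eps *: rho).
      by move=> x; rewrite /S2 -scaler_sumr sumrB -scaler_sumr hsum sumS1.
    split; last by [].
    split.
      pose x0 : setting X := finfun (fun i => Ordinal (hX i)).
      by rewrite -(sumS2 x0); apply: psd_sum.
    by rewrite mxtraceZ mxtraceB mxtraceZ trB hrho.2 mulr1 mulVf.
  split; first by [].
  move=> I hI a x x' hxx'.
  rewrite /S2 -!scaler_sumr !sumrB -!scaler_sumr (hmarg I hI a x x' hxx').
  have mS1 : forall y, \sum_(a' : outcome A | [forall i in I, a' i == a i]) S1 a' y
     = if [forall i in I, Lx L y i == a i] then rho else 0.
    move=> y; rewrite /S1 -big_mkcondr /=.
    case: ifP => hQ.
      rewrite (big_pred1 (Lx L y)) // => a'; rewrite inIL_eq /=.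
      by case: eqP => [->|]; rewrite ?hQ ?andbF.
    rewrite big_pred0 // => a'; rewrite inIL_eq.
    by case: eqP => [->|]; rewrite ?hQ ?andbF.
  rewrite !mS1.
  have -> : [forall i in I, Lx L x i == a i] = [forall i in I, Lx L x' i == a i] => //.
  apply: eq_forallb => i; rewrite !ffunE.
  by case: (boolP (i \in I)) => //= hi; rewrite hxx'.
have dec : forall a x, S a x = eps *: S1 a x + (1 - eps) *: S2 a x.
  by move=> a x; rewrite /S2 scalerA mulfV // scale1r addrC subrK.
have := hedge eps S1 S2 _ LHS1 NS2 dec.
rewrite (ltW e0) (ltW e1) => /(_ isT) /eqP.
by rewrite gt_eqF.
Qed.
End DirB.


Theorem theorem1 (R : realType) (n : nat) (A X : 'I_n -> nat) (d : nat)
  (hA : forall i, (0 < A i)%N) (hX : forall i, (0 < X i)%N)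
  (S : assemblage R A X d.+1) (hS : no_signaling S)
  (Rp : outcome A -> setting X -> 'M[R[i]]_d.+1)
  (hRp : forall a x, orth_proj_onto (S a x) (Rp a x))
  (ordL : seq (ldbox A X)) (ordI : ldbox A X -> seq (outcome A * setting X))
  (hordL : perm_eq ordL (enum (ldbox A X)))
  (hordI : forall L, perm_eq (ordI L) [seq ax <- enum {: outcome A * setting X} | in_IL L ax]) :
  on_edge S <->
  \det (\prod_(L <- ordL) (\prod_(ax <- ordI L) Rp ax.1 ax.2 - 1)) != 0.
Proof.
split.
  move=> he; apply/negP => hd.
  have [L [v [v0 hv]]] := (K1 hRp hordL hordI).1 hd.
  exact: (E_notedge hX hS hRp v0 hv he).
move=> hd; apply: (notE_edge hA hS hRp) => L v v0 hv.
move/negP: hd; apply; apply/(K1 hRp hordL hordI).2.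
by exists L, v; split.
Qed.
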